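(* Let $L$ be any finite-dimensional Lie algebra over a field $F$. Then $\phi^*(L)=R(L)$, the solvable radical of $L$.
   Context: For a nonzero subalgebra $X$ of $L$, the strict core $k(X)$ is the sum of all ideals of $L$ that are proper subalgebras of $X$ (it is $0$ if there are none). For a maximal subalgebra $M$ of $L$, a subalgebra $C$ is a completion of $M$ if $C\not\subseteq M$ but every proper subalgebra of $C$ that is an ideal of $L$ is contained in $M$; an ideal completion is a completion that is an ideal of $L$; an abelian ideal completion is an ideal completion $C$ with $C/k(C)$ abelian. $F^*(L)$ is the intersection of all maximal subalgebras of $L$ which have no abelian ideal completion (with $F^*(L)=L$ if there are no such maximal subalgebras), and $\phi^*(L)$ is the largest ideal of $L$ contained in $F^*(L)$. $R(L)$ is the largest solvable ideal of $L$. *)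

(* Defs.v *)
From HB Require Import structures.
From mathcomp Require Import all_boot all_algebra.
Set Implicit Arguments. Unset Strict Implicit. Unset Printing Implicit Defensive.
Import GRing.Theory.
Local Open Scope ring_scope.

Definition is_lie (F : fieldType) (L : vectType F) (br : L -> L -> L) : Prop :=
  [/\ forall a x y z, br (a *: x + y) z = a *: br x z + br y z,
      forall a x y z, br z (a *: x + y) = a *: br z x + br z y,
      forall x, br x x = 0 &
      forall x y z, br x (br y z) + br y (br z x) + br z (br x y) = 0].

Section Lie.
Variables (F : fieldType) (L : vectType F) (br : L -> L -> L).

Definition subalg (A : {vspace L}) : Prop :=
  forall x y, x \in A -> y \in A -> br x y \in A.

Definition ideal (A : {vspace L}) : Prop :=
  forall x y, y \in A -> br x y \in A.

(* [A, B]: the subspace spanned by all brackets [a, b] (spanned by brackets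
   of basis vectors, by bilinearity) *)
Definition lbr (A B : {vspace L}) : {vspace L} :=
  <<[seq br a b | a <- vbasis A, b <- vbasis B]>>%VS.

Fixpoint derived (A : {vspace L}) (n : nat) : {vspace L} :=
  match n with
  | 0 => A
  | n.+1 => lbr (derived A n) (derived A n)
  end.

Definition solvable (A : {vspace L}) : Prop := exists n, derived A n = 0%VS.

Definition max_subalg (M : {vspace L}) : Prop :=
  [/\ subalg M, M <> fullv &
      forall A, subalg A -> (M <= A)%VS -> A = M \/ A = fullv].

(* K is the strict core k(X): the sum of all ideals of L that are proper
   subalgebras of X, i.e. the least subspace containing all of them
   (0 if there are none). *)
Definition strict_core_spec (X K : {vspace L}) : Prop :=
  (forall I, ideal I -> subalg I -> (I <= X)%VS -> I <> X -> (I <= K)%VS) /\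
  (forall K', (forall I, ideal I -> subalg I -> (I <= X)%VS -> I <> X ->
                 (I <= K')%VS) -> (K <= K')%VS).

Definition completion (M C : {vspace L}) : Prop :=
  [/\ subalg C, ~ (C <= M)%VS &
      forall I, subalg I -> ideal I -> (I <= C)%VS -> I <> C -> (I <= M)%VS].

Definition ideal_completion (M C : {vspace L}) : Prop :=
  completion M C /\ ideal C.

(* C / k(C) abelian, i.e. [C, C] <= k(C) *)
Definition abelian_ideal_completion (M C : {vspace L}) : Prop :=
  ideal_completion M C /\
  exists K, strict_core_spec C K /\ (lbr C C <= K)%VS.

(* membership in F*(L): the intersection of all maximal subalgebras having
   no abelian ideal completion (all of L if there are none) *)
Definition in_Fstar (x : L) : Prop :=
  forall M, max_subalg M -> ~ (exists C, abelian_ideal_completion M C) ->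
    x \in M.

Definition is_phistar (P : {vspace L}) : Prop :=
  [/\ ideal P, (forall x, x \in P -> in_Fstar x) &
      forall I, ideal I -> (forall x, x \in I -> in_Fstar x) -> (I <= P)%VS].

Definition is_radical (R : {vspace L}) : Prop :=
  [/\ ideal R, solvable R &
      forall I, ideal I -> solvable I -> (I <= R)%VS].

End Lie.

(* Main.v *)
Require Import Defs.
From HB Require Import structures.
From mathcomp Require Import all_boot all_algebra.
From Stdlib Require Import Classical.
From mathcomp Require Import zify.
Set Implicit Arguments. Unset Strict Implicit. Unset Printing Implicit Defensive.
Import GRing.Theory.
Local Open Scope ring_scope.

Section LieFacts.
Variables (F : fieldType) (L : vectType F) (br : L -> L -> L).
Hypothesis Hl : is_lie br.

Definition adl x := br x.
Definition adr z y := br y z.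
Fact adl_lin x : linear (adl x).
Proof. by move=> a u v; case: Hl => _ H _ _; apply: H. Qed.
Fact adr_lin z : linear (adr z).
Proof. by move=> a u v; case: Hl => H _ _ _; apply: H. Qed.
HB.instance Definition _ x := GRing.isLinear.Build F L L *:%R (adl x) (adl_lin x).
HB.instance Definition _ z := GRing.isLinear.Build F L L *:%R (adr z) (adr_lin z).

Lemma brDr x u v : br x (u + v) = br x u + br x v.
Proof. exact: (raddfD (adl x)). Qed.
Lemma brDl x u v : br (u + v) x = br u x + br v x.
Proof. exact: (raddfD (adr x)). Qed.
Lemma brZr x a u : br x (a *: u) = a *: br x u.
Proof. exact: (linearZZ (adl x)). Qed.
Lemma brZl x a u : br (a *: u) x = a *: br u x.
Proof. exact: (linearZZ (adr x)). Qed.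
Lemma br0r x : br x 0 = 0.
Proof. exact: (raddf0 (adl x)). Qed.
Lemma br0l x : br 0 x = 0.
Proof. exact: (raddf0 (adr x)). Qed.
Lemma brNr x u : br x (- u) = - br x u.
Proof. exact: (raddfN (adl x)). Qed.
Lemma brNl x u : br (- u) x = - br u x.
Proof. exact: (raddfN (adr x)). Qed.
Lemma brBr x u v : br x (u - v) = br x u - br x v.
Proof. exact: (raddfB (adl x)). Qed.
Lemma brBl x u v : br (u - v) x = br u x - br v x.
Proof. exact: (raddfB (adr x)). Qed.
Lemma brxx x : br x x = 0.
Proof. by case: Hl => _ _ H _; apply: H. Qed.
Lemma br_anti x y : br y x = - br x y.
Proof.
have := brxx (x + y); rewrite brDl !brDr !brxx add0r addr0 => /eqP.
by rewrite addrC addr_eq0 => /eqP.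
Qed.
Lemma jacobi x y z : br x (br y z) + br y (br z x) + br z (br x y) = 0.
Proof. by case: Hl => _ _ _ H; apply: H. Qed.
Lemma br_sumr x I r (P : pred I) (G : I -> L) :
  br x (\sum_(i <- r | P i) G i) = \sum_(i <- r | P i) br x (G i).
Proof. exact: (linear_sum (adl x)). Qed.
Lemma br_suml x I r (P : pred I) (G : I -> L) :
  br (\sum_(i <- r | P i) G i) x = \sum_(i <- r | P i) br (G i) x.
Proof. exact: (linear_sum (adr x)). Qed.

Lemma memv_lbr (A B : {vspace L}) x y : x \in A -> y \in B -> br x y \in lbr br A B.
Proof.
move=> xA yB; rewrite (coord_vbasis xA) (coord_vbasis yB) br_suml.
apply: memv_suml => i _; rewrite brZl br_sumr; apply: memvZ.
apply: memv_suml => j _; rewrite brZr; apply: memvZ.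
by apply: memv_span; apply: allpairs_f; apply: mem_nth; rewrite size_tuple.
Qed.

Lemma lbr_sub (A B S : {vspace L}) :
  (forall x y, x \in A -> y \in B -> br x y \in S) -> (lbr br A B <= S)%VS.
Proof.
move=> H; apply/span_subvP => z /allpairsP [[a b] [/= aA bB ->]].
by apply: H; apply: vbasis_mem.
Qed.

Definition ad x : 'End(L) := linfun (adl x).
Lemma adE x y : ad x y = br x y.
Proof. by rewrite /ad lfunE. Qed.

Lemma lbr_stable x (A B S : {vspace L}) :
  (forall a b, a \in A -> b \in B -> br x (br a b) \in S) ->
  forall y, y \in lbr br A B -> br x y \in S.
Proof.
move=> H y Hy; rewrite -adE.
have: (ad x @: lbr br A B <= S)%VS.
  rewrite /lbr limg_span; apply/span_subvP => z /mapP [w /allpairsP [[a b] [/= aA bB ->]] ->].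
  by rewrite adE; apply: H; apply: vbasis_mem.
by move/subvP; apply; apply: memv_img.
Qed.

Lemma br_deriv x y z : br x (br y z) = br (br x y) z + br y (br x z).
Proof.
have := jacobi x y z.
rewrite (br_anti x z) brNr (br_anti (br x y) z) => /eqP.
rewrite -addrA addr_eq0 => /eqP ->; rewrite opprD !opprK addrC.
done.
Qed.

Lemma ideal_subalg (A : {vspace L}) : ideal br A -> subalg br A.
Proof. by move=> H x y _ yA; apply: H. Qed.

Lemma ideal_l (A : {vspace L}) x y : ideal br A -> x \in A -> br x y \in A.
Proof. by move=> H xA; rewrite br_anti memvN; apply: H. Qed.

Lemma lbr_ideal (A B : {vspace L}) : ideal br A -> ideal br B -> ideal br (lbr br A B).
Proof.
move=> HA HB x; apply: lbr_stable => a b aA bB.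
rewrite br_deriv; apply: memvD; apply: memv_lbr => //.
- exact: HA.
- exact: HB.
Qed.

Lemma lbrS (A A' B B' : {vspace L}) : (A <= A')%VS -> (B <= B')%VS ->
  (lbr br A B <= lbr br A' B')%VS.
Proof.
move=> /subvP HA /subvP HB; apply: lbr_sub => x y xA yB.
by apply: memv_lbr; [apply: HA | apply: HB].
Qed.

Lemma lbr_subl (A B : {vspace L}) : ideal br A -> (lbr br A B <= A)%VS.
Proof. by move=> HA; apply: lbr_sub => x y xA _; apply: ideal_l. Qed.

Lemma lbr_subr (A B : {vspace L}) : ideal br B -> (lbr br A B <= B)%VS.
Proof. by move=> HB; apply: lbr_sub => x y _ yB; apply: HB. Qed.

Lemma derived_ideal (A : {vspace L}) n : ideal br A -> ideal br (derived br A n).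
Proof. by move=> HA; elim: n => //= n IH; apply: lbr_ideal. Qed.

Lemma derivedS (A B : {vspace L}) n : (A <= B)%VS -> (derived br A n <= derived br B n)%VS.
Proof. by move=> H; elim: n => //= n IH; apply: lbrS. Qed.

Lemma derived_add (A : {vspace L}) n m :
  derived br (derived br A n) m = derived br A (m + n).
Proof. by elim: m => //= m ->. Qed.

Lemma derived_decr (A : {vspace L}) n : ideal br A ->
  (derived br A n.+1 <= derived br A n)%VS.
Proof. by move=> HA /=; apply: lbr_subl; apply: derived_ideal. Qed.

Lemma derived0 n : derived br 0%VS n = 0%VS.
Proof.
elim: n => //= n ->; apply/eqP; rewrite -subv0; apply: lbr_sub => x y.
by rewrite memv0 => /eqP -> _; rewrite br0l mem0v.
Qed.

Lemma lbr_addI (I X : {vspace L}) : ideal br I ->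
  (lbr br (I + X) (I + X) <= I + lbr br X X)%VS.
Proof.
move=> HI; apply: lbr_sub => x y /memv_addP [i iI [u uX ->]] /memv_addP [j jI [v vX ->]].
rewrite brDl !brDr addrA; apply: memv_add; last exact: memv_lbr.
apply: memvD; first apply: memvD.
- exact: ideal_l.
- exact: ideal_l.
- exact: HI.
Qed.

Lemma derived_sumI (I J : {vspace L}) n : ideal br I ->
  (derived br (I + J) n <= I + derived br J n)%VS.
Proof.
move=> HI; elim: n => [|n IH] /=; first exact: subvv.
apply: subv_trans (lbr_addI _ HI); exact: lbrS.
Qed.

Lemma ideal_add (I J : {vspace L}) : ideal br I -> ideal br J -> ideal br (I + J).
Proof.
move=> HI HJ x y /memv_addP [i iI [j jJ ->]]; rewrite brDr.
by apply: memv_add; [apply: HI | apply: HJ].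
Qed.

Lemma ideal0 : ideal br 0%VS.
Proof. by move=> x y; rewrite memv0 => /eqP ->; rewrite br0r mem0v. Qed.

Lemma solvable_add (I J : {vspace L}) : ideal br I -> solvable br I -> solvable br J ->
  solvable br (I + J).
Proof.
move=> HI [m Hm] [n Hn]; exists (m + n).
rewrite -derived_add; apply/eqP; rewrite -subv0 -Hm; apply: derivedS.
by have := derived_sumI J n HI; rewrite Hn addv0.
Qed.

Lemma solvableS (I J : {vspace L}) : (I <= J)%VS -> solvable br J -> solvable br I.
Proof.
move=> H [n Hn]; exists n; apply/eqP; rewrite -subv0 -Hn; exact: derivedS.
Qed.

Lemma dim_eq (U V : {vspace L}) : (U <= V)%VS -> (\dim V <= \dim U)%N -> U = V.
Proof. by move=> H1 H2; apply/eqP; rewrite eqEdim H1 H2. Qed.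

Lemma dim_lt (U V : {vspace L}) : (U <= V)%VS -> U <> V -> (\dim U < \dim V)%N.
Proof.
move=> H1 H2; rewrite ltnNge; apply/negP => H3; apply: H2; exact: dim_eq.
Qed.

Lemma dim_le_full (U : {vspace L}) : (\dim U <= \dim (fullv : {vspace L}))%N.
Proof. exact: dimvS (subvf U). Qed.

Lemma ex_maxdim (P : {vspace L} -> Prop) A0 : P A0 ->
  exists A, P A /\ forall B, P B -> (\dim B <= \dim A)%N.
Proof.
move=> PA0.
suff: forall n A, P A -> (\dim (fullv : {vspace L}) - \dim A <= n)%N ->
   exists A, P A /\ forall B, P B -> (\dim B <= \dim A)%N.
  by move=> H; apply: (H _ A0 PA0).
elim=> [|n IH] A PA Hn.
  exists A; split=> // B _; apply: leq_trans (dim_le_full B) _.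
  by rewrite -subn_eq0 -leqn0.
case: (classic (exists B, P B /\ (\dim A < \dim B)%N)) => [[B [PB HB]]|H].
  apply: (IH B PB); have := dim_le_full B; lia.
exists A; split=> // B PB; rewrite leqNgt; apply/negP => HB; apply: H.
by exists B.
Qed.

Lemma ex_mindim (P : {vspace L} -> Prop) A0 : P A0 ->
  exists A, P A /\ forall B, P B -> (\dim A <= \dim B)%N.
Proof.
move=> PA0.
suff: forall n A, P A -> (\dim A <= n)%N ->
   exists A, P A /\ forall B, P B -> (\dim A <= \dim B)%N.
  by move=> H; apply: (H _ A0 PA0).
elim=> [|n IH] A PA Hn.
  by exists A; split=> // B _; apply: leq_trans Hn _.
case: (classic (exists B, P B /\ (\dim B < \dim A)%N)) => [[B [PB HB]]|H].
  apply: (IH B PB); lia.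
exists A; split=> // B PB; rewrite leqNgt; apply/negP => HB; apply: H.
by exists B.
Qed.

Lemma ex_radical : exists R, is_radical br R.
Proof.
have [R [[HR SR] Hmax]] := @ex_maxdim (fun A => ideal br A /\ solvable br A) 0%VS
  (conj ideal0 (ex_intro _ 0%N (derived0 0))).
exists R; split=> // I HI SI.
have E: R = (R + I)%VS.
  apply: dim_eq; first exact: addvSl.
  apply: Hmax; split; first exact: ideal_add.
  exact: solvable_add.
by rewrite E addvSr.
Qed.


Definition adk x k y := iter k (br x) y.
Fact adk_lin x k : linear (adk x k).
Proof.
move=> a u v; rewrite /adk; elim: k => [|k IH] //=.
by rewrite IH brDr brZr.
Qed.
HB.instance Definition _ x k := GRing.isLinear.Build F L L *:%R (adk x k) (adk_lin x k).

Lemma iterD0 x k u v : iter k (br x) (u + v) = iter k (br x) u + iter k (br x) v.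
Proof. exact: (raddfD (adk x k)). Qed.
Lemma iter0 x k : iter k (br x) 0 = 0.
Proof. exact: (raddf0 (adk x k)). Qed.
Lemma iterB0 x k u v : iter k (br x) (u - v) = iter k (br x) u - iter k (br x) v.
Proof. exact: (raddfB (adk x k)). Qed.
Lemma iterZ0 x k a u : iter k (br x) (a *: u) = a *: iter k (br x) u.
Proof. exact: (linearZZ (adk x k)). Qed.

Definition adn x k : 'End(L) := linfun (adk x k).
Lemma adnE x k y : adn x k y = iter k (br x) y.
Proof. by rewrite /adn lfunE. Qed.
Lemma mem_kerE x k y : (y \in lker (adn x k)) = (iter k (br x) y == 0).
Proof. by rewrite memv_ker adnE. Qed.

Section Fitting.
Variable x : L.
Local Notation d := (\dim (fullv : {vspace L})).
Local Notation K k := (lker (adn x k)).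

Lemma kerSn k : (K k <= K k.+1)%VS.
Proof.
by apply/subvP => y; rewrite !mem_kerE iterS => /eqP ->; rewrite br0r.
Qed.

Lemma kerD k j : (K k <= K (j + k))%VS.
Proof. elim: j => [|j IH]; [exact: subvv | exact: subv_trans IH (kerSn _)]. Qed.

Lemma kerS k m : (k <= m)%N -> (K k <= K m)%VS.
Proof. by move=> H; rewrite -(subnK H); apply: kerD. Qed.

Lemma ker_stable k : K k = K k.+1 -> forall j, K (j + k) = K k.
Proof.
move=> E; elim=> [|j IH] //.
apply/eqP; rewrite eqEsubv; apply/andP; split; last exact: kerD.
apply/subvP => y; rewrite addSn mem_kerE iterSr => Hy.
have : br x y \in K k by rewrite -IH mem_kerE.
by rewrite mem_kerE -iterSr -mem_kerE E.
Qed.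

Lemma ex_stable : exists k, (k <= d)%N /\ K k = K k.+1.
Proof.
apply: NNPP => H.
have H2 : forall k, (k <= d.+1)%N -> (k <= \dim (K k))%N.
  elim=> [|k IH] Hk //.
  have Hk' : (k <= d)%N by [].
  have := dim_lt (kerSn k) (fun E => H (ex_intro _ k (conj Hk' E))).
  have := IH (ltnW Hk); lia.
have := H2 d.+1 (leqnn _); have := dim_le_full (K d.+1); lia.
Qed.

Lemma stab m y : iter m (br x) y = 0 -> iter d (br x) y = 0.
Proof.
move=> Hy; have [k [Hk E]] := ex_stable.
have: y \in K (m + k) by apply: (subvP (kerS (leq_addr k m))); rewrite mem_kerE Hy.
rewrite ker_stable // => /(subvP (kerS Hk)).
by rewrite mem_kerE => /eqP.
Qed.

Lemma leib n a b y z : (a + b = n)%N -> iter a (br x) y = 0 -> iter b (br x) z = 0 ->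
  iter n (br x) (br y z) = 0.
Proof.
elim: n a b y z => [|n IH] a b y z Hab Hy Hz.
  have Ha : a = 0%N by lia.
  by move: Hy; rewrite Ha /= => ->; rewrite br0l.
case: a Hab Hy => [|a] Hab Hy.
  by move: Hy => /= Hy; rewrite Hy br0l /= iter0 br0r.
case: b Hab Hz => [|b] Hab Hz.
  by move: Hz => /= Hz; rewrite Hz br0r /= iter0 br0r.
rewrite iterSr br_deriv iterD0 (IH a b.+1) ?(IH a.+1 b) ?add0r //; try lia;
  by rewrite -iterSr.
Qed.

Lemma ker_subalg : subalg br (K d).
Proof.
move=> y z; rewrite !mem_kerE => /eqP Hy /eqP Hz.
by apply/eqP; apply: (stab (leib (erefl (d + d)%N) Hy Hz)).
Qed.

Lemma fitting : (K d + limg (adn x d))%VS = fullv.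
Proof.
have Hcap : (K d :&: limg (adn x d) = 0)%VS.
  apply/eqP; rewrite -subv0; apply/subvP => v /memv_capP [].
  rewrite mem_kerE => /eqP Hv /memv_imgP [w _ Hw].
  rewrite memv0; apply/eqP; rewrite Hw adnE.
  apply: (stab (m := (d + d)%N)); rewrite iterD; move: Hv; by rewrite Hw adnE.
apply: dim_eq; first exact: subvf.
have := dimv_sum_cap (K d) (limg (adn x d)).
rewrite Hcap dimv0 addn0 => ->.
have := limg_ker_dim (adn x d) fullv; rewrite capfv => E; exact: (eq_leq (esym E)).
Qed.

End Fitting.


Lemma ex_switch (p : pred nat) N : ~~ p 0 -> p N -> exists k, ~~ p k /\ p k.+1.
Proof.
elim: N => [|N IH] H0 HN; first by rewrite HN in H0.
case: (boolP (p N)) => HpN; first exact: IH.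
by exists N.
Qed.

Lemma subalg_addline (H : {vspace L}) y : subalg br H ->
  (forall h, h \in H -> br h y \in H) -> subalg br (H + <[y]>)%VS.
Proof.
move=> HH Hy x1 x2 /memv_addP [h1 h1H [v1 /vlineP [a ->] ->]]
  /memv_addP [h2 h2H [v2 /vlineP [b ->] ->]].
rewrite brDl !brDr !brZl !brZr brxx !scaler0 addr0.
rewrite -[X in X \in _]addr0; apply: memv_add; last exact: mem0v.
rewrite (br_anti h2 y) scalerN; apply: memvD; first apply: memvD.
- exact: HH.
- by apply: memvZ; apply: Hy.
- by rewrite memvN; apply: memvZ; apply: Hy.
Qed.

Section Engel.
Variables (J : {vspace L}) (N : nat).
Hypothesis HJ : ideal br J.

Lemma engel n : forall (K U W : {vspace L}), (\dim K <= n)%N -> subalg br K -> (J <= K)%VS ->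
  (forall x y, x \in K -> iter N (br x) y \in J) ->
  (forall x u, x \in K -> u \in U -> br x u \in U) ->
  (forall x w, x \in K -> w \in W -> br x w \in W) ->
  (J <= W)%VS -> ~~ (U <= W)%VS ->
  exists2 u, u \in U & (u \notin W) /\ forall x, x \in K -> br x u \in W.
Proof.
have base: forall (K U W : {vspace L}), K = J -> (J <= W)%VS -> ~~ (U <= W)%VS ->
  exists2 u, u \in U & (u \notin W) /\ forall x, x \in K -> br x u \in W.
  move=> K U W -> HJW /subvPn [u uU uW]; exists u => //; split=> // x xJ.
  by apply: (subvP HJW); apply: ideal_l.
elim: n => [|n IH] K U W HdK HK HJK Hnil HU HW HJW HUW.
  apply: base => //; apply/esym/dim_eq => //; have := dimvS HJK; lia.
case: (eqVneq K J) => [E|neq]; first exact: base.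
have [H [[HH [HJH [HHK HneK]]] Hmax]] := @ex_maxdim
  (fun H => subalg br H /\ (J <= H)%VS /\ (H <= K)%VS /\ H <> K) J
  (conj (ideal_subalg HJ) (conj (subvv J) (conj HJK (fun E => (negP neq) (introT eqP (esym E)))))).
have HdH : (\dim H <= n)%N by have := dim_lt HHK HneK; lia.
have HnilH : forall x y, x \in H -> iter N (br x) y \in J.
  by move=> x y xH; apply: Hnil; apply: (subvP HHK).
have HKH : ~~ (K <= H)%VS.
  by apply/negP => KH; apply: HneK; apply/eqP; rewrite eqEsubv HHK KH.
have [y yK [yH Hy]] := IH H K H HdH HH HJH HnilH
  (fun x u xH uK => HK x u (subvP HHK x xH) uK) HH HJH HKH.
have ES : (H + <[y]>)%VS = K.
  apply: NNPP => NE.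
  have HS : subalg br (H + <[y]>)%VS by apply: subalg_addline.
  have := Hmax (H + <[y]>)%VS; rewrite subv_add HHK -memvE yK.
  have := subv_trans HJH (addvSl H <[y]>).
  move=> A1 A2; have := A2 (conj HS (conj A1 (conj isT NE))) => A3.
  have E2 : H = (H + <[y]>)%VS by apply: dim_eq => //; exact: addvSl.
  by move: yH; rewrite E2 (subvP (addvSr H _)) // memv_line.
have [u0 u0U [u0W Hu0]] := IH H U W HdH HH HJH HnilH
  (fun x u xH uU => HU x u (subvP HHK x xH) uU)
  (fun x w xH wW => HW x w (subvP HHK x xH) wW) HJW HUW.
pose Q v := v \in U /\ forall h, h \in H -> br h v \in W.
have Qstab : forall v, Q v -> Q (br y v).
  move=> v [vU Hv]; split; first exact: HU.
  move=> h hH.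
  have -> : br h (br y v) = br y (br h v) - br (br y h) v.
    by rewrite (br_deriv y h v) addrAC subrr add0r.
  apply: memvB; first by apply: HW => //; apply: Hv.
  by apply: Hv; rewrite br_anti memvN; apply: Hy.
have Qiter : forall k, Q (iter k (br y) u0).
  by elim=> [|k IHk] /=; [split | apply: Qstab].
have [k [Hk1 Hk2]] := @ex_switch (fun k => iter k (br y) u0 \in W) N u0W
  (subvP HJW _ (Hnil y u0 yK)).
have [uU Hu] := Qiter k.
exists (iter k (br y) u0) => //; split => // x.
rewrite -ES => /memv_addP [h hH [v /vlineP [c ->] ->]].
rewrite brDl brZl; apply: memvD; first exact: Hu.
by apply: memvZ; rewrite -iterS.
Qed.

End Engel.


Lemma ex_core (X : {vspace L}) : exists K, strict_core_spec br X K.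
Proof.
pose Q I := ideal br I /\ subalg br I /\ (I <= X)%VS /\ I <> X.
pose UB (K' : {vspace L}) := forall I, ideal br I -> subalg br I -> (I <= X)%VS -> I <> X ->
  (I <= K')%VS.
have [S [HS Smax]] := @ex_maxdim (fun S => forall K', UB K' -> (S <= K')%VS) 0%VS
  (fun K' _ => sub0v K').
exists S; split => // I HI HIs HIX HneX.
have E : S = (S + I)%VS.
  apply: dim_eq; first exact: addvSl.
  apply: Smax => K' HK'; rewrite subv_add HS //=; exact: HK'.
by rewrite E addvSr.
Qed.

Lemma ex_max_subalg (S : {vspace L}) : subalg br S -> S <> fullv ->
  exists M, max_subalg br M /\ (S <= M)%VS.
Proof.
move=> HS HSf.
have [M [[HM [HSM HMf]] Mmax]] := @ex_maxdim
  (fun M => subalg br M /\ (S <= M)%VS /\ M <> fullv) S (conj HS (conj (subvv S) HSf)).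
exists M; split => //; split => // A HA HMA.
case: (classic (A = fullv)) => [->|HAf]; [by right | left].
apply/esym/dim_eq => //; apply: Mmax; split => //; split => //.
exact: subv_trans HSM HMA.
Qed.

Lemma derived_const (C : {vspace L}) : lbr br C C = C -> forall k, derived br C k = C.
Proof. by move=> E; elim=> //= k ->. Qed.

Lemma easy (R : {vspace L}) : is_radical br R -> forall x, x \in R -> in_Fstar br x.
Proof.
move=> [HR [n Hn] _] x xR M HM HnoC; apply: (subvP _ x xR).
apply: NNPP => /negP RM.
have [C [[HC [HCR HCM]] Cmin]] := @ex_mindim
  (fun C => ideal br C /\ (C <= R)%VS /\ ~~ (C <= M)%VS) R (conj HR (conj (subvv R) RM)).
apply: HnoC; exists C; split; first split; first split.
- exact: ideal_subalg.
- exact/negP.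
- move=> I HIs HI HIC HneC; case: (boolP (I <= M)%VS) => // HIM.
  have := Cmin I (conj HI (conj (subv_trans HIC HCR) HIM)).
  have := dim_lt HIC HneC; lia.
- exact: HC.
have [K HK] := ex_core C; exists K; split => //.
case: HK => HK _; apply: HK.
- exact: lbr_ideal.
- exact/ideal_subalg/lbr_ideal.
- exact: lbr_subl.
move=> E; move: HCM; have := derivedS n HCR; rewrite Hn derived_const // => C0.
by move: C0; rewrite subv0 => /eqP ->; rewrite sub0v.
Qed.

Lemma perfect_part (I : {vspace L}) : ideal br I -> ~ solvable br I ->
  exists P, [/\ ideal br P, (P <= I)%VS, P <> 0%VS & lbr br P P = P].
Proof.
move=> HI nsol.
have Hle : forall k, (derived br I k <= I)%VS.
  elim=> [|k IH]; first exact: subvv.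
  exact: subv_trans (derived_decr k HI) IH.
have [k Hk] : exists k, derived br I k.+1 = derived br I k.
  apply: NNPP => H.
  have H2 : forall k, (k + \dim (derived br I k) <= \dim I)%N.
    elim=> [|k IH] //.
    have := dim_lt (derived_decr k HI) (fun E => H (ex_intro _ k E)); lia.
  have := H2 (\dim I).+1; lia.
exists (derived br I k); split => //.
- exact: derived_ideal.
- by move=> E; apply: nsol; exists k.
Qed.

Lemma iter_ideal (J : {vspace L}) x k y : ideal br J -> y \in J -> iter k (br x) y \in J.
Proof. by move=> HJ yJ; elim: k => //= k IH; apply: HJ. Qed.

Lemma iter_modJ (J : {vspace L}) p j y k : ideal br J -> j \in J ->
  iter k (br (p + j)) y - iter k (br p) y \in J.
Proof.
move=> HJ jJ; elim: k => [|k IH] /=; first by rewrite subrr mem0v.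
set A := iter k (br (p + j)) y; set B := iter k (br p) y.
have -> : br (p + j) A - br p B = br p (A - B) + br j A.
  by rewrite brDl brBr addrAC.
apply: memvD; last exact: ideal_l.
exact: HJ.
Qed.

Lemma subalg_addI (S J : {vspace L}) : subalg br S -> ideal br J -> subalg br (S + J).
Proof.
move=> HS HJ x y /memv_addP [s sS [j jJ ->]] /memv_addP [t tS [i iJ ->]].
rewrite brDl !brDr -addrA; apply: memv_add; first exact: HS.
apply: memvD; first exact: HJ.
apply: memvD; [exact: ideal_l | exact: HJ].
Qed.


Lemma hard (I : {vspace L}) : ideal br I -> (forall x, x \in I -> in_Fstar br x) ->
  solvable br I.
Proof.
move=> HI HF; apply: NNPP => nsol.
have [P [HP HPI HP0 HPP]] := perfect_part HI nsol.
have HP0' : ~~ (P <= 0)%VS by rewrite subv0; apply/eqP.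
have [J [[HJ HPJ] Jmax]] := @ex_maxdim (fun J => ideal br J /\ ~~ (P <= J)%VS) 0%VS
  (conj ideal0 HP0').
have Jbig : forall J', ideal br J' -> (J <= J')%VS -> J' <> J -> (P <= J')%VS.
  move=> J' HJ' HJJ' Hne; apply: NNPP => /negP HPJ'.
  apply: Hne; apply/esym/dim_eq => //; exact: Jmax.
have [M [HM [HJM HPM]]] : exists M, max_subalg br M /\ (J <= M)%VS /\ ~~ (P <= M)%VS.
  apply: NNPP => Hno.
  have [d' Hd] : exists d', \dim (fullv : {vspace L}) = d'.+1.
    case E: (\dim (fullv : {vspace L})) => [|d']; last by exists d'.
    exfalso; apply: HP0; apply/eqP; rewrite -dimv_eq0 -leqn0.
    by have := dimvS (subvf P); rewrite E.
  pose d := \dim (fullv : {vspace L}).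
  have Nil : forall x y, x \in P -> iter d (br x) y \in J.
    move=> x y xP.
    have ES : (lker (adn x d) + J)%VS = fullv.
      apply: NNPP => NE.
      have [M [HM HSM]] := ex_max_subalg (subalg_addI (@ker_subalg x) HJ) NE.
      have HPM : (P <= M)%VS.
        apply: NNPP => /negP H; apply: Hno; exists M; split => //; split => //.
        exact: subv_trans (addvSr _ _) HSM.
      case: HM => _ HMf _; apply: HMf; apply/eqP; rewrite eqEsubv subvf /=.
      rewrite -(fitting x) subv_add (subv_trans (addvSl _ _) HSM) /=.
      apply: subv_trans HPM; apply/subvP => v /memv_imgP [w _ ->].
      by rewrite adnE /d Hd iterS; apply: ideal_l.
    have: y \in (lker (adn x d) + J)%VS by rewrite ES memvf.
    move=> /memv_addP [u uK [j jJ ->]]; rewrite iterD0.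
    move: uK; rewrite mem_kerE => /eqP ->; rewrite add0r.
    exact: iter_ideal.
  have NilK : forall x y, x \in (P + J)%VS -> iter d (br x) y \in J.
    move=> x y /memv_addP [p pP [j jJ ->]].
    have H1 := iter_modJ p y d HJ jJ; have H2 := Nil p y pP.
    rewrite -(subrK (iter d (br p) y) (iter d (br (p + j)) y)); exact: memvD.
  pose K := (P + J)%VS.
  have HK : subalg br K := ideal_subalg (ideal_add HP HJ).
  have HJK : (J <= K)%VS := addvSr P J.
  have HPK : (P <= K)%VS := addvSl P J.
  have HneJ : J <> K by move=> E; move: HPJ; rewrite E HPK.
  pose stab (W : {vspace L}) := forall x w, x \in K -> w \in W -> br x w \in W.
  have [W [[HJW [HWK [HWne HWs]]] Wmax]] := @ex_maxdim
    (fun W => (J <= W)%VS /\ (W <= K)%VS /\ W <> K /\ stab W) J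
    (conj (subvv J) (conj HJK (conj HneJ (fun x w _ wJ => HJ x w wJ)))).
  have HKW : ~~ (K <= W)%VS.
    by apply/negP => KW; apply: HWne; apply/eqP; rewrite eqEsubv HWK KW.
  have [u uK [uW Hu]] := @engel J d HJ (\dim K) K K W (leqnn _) HK HJK NilK
    (fun x u xK uK => HK x u xK uK) HWs HJW HKW.
  have EW : (W + <[u]>)%VS = K.
    apply: NNPP => NE.
    have A : stab (W + <[u]>)%VS.
      move=> x v xK /memv_addP [w wW [v' /vlineP [c ->] ->]].
      rewrite brDr brZr -[X in X \in _]addr0; apply: memv_add; last exact: mem0v.
      apply: memvD; [exact: HWs | apply: memvZ; exact: Hu].
    have := Wmax (W + <[u]>)%VS.
    have B : (W + <[u]> <= K)%VS by rewrite subv_add HWK -memvE uK.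
    move=> /(_ (conj (subv_trans HJW (addvSl _ _)) (conj B (conj NE A)))) C.
    have E2 : W = (W + <[u]>)%VS by apply: dim_eq => //; exact: addvSl.
    by move: uW; rewrite E2 (subvP (addvSr W _)) // memv_line.
  apply: HWne; apply/eqP; rewrite eqEsubv HWK /=.
  rewrite subv_add HJW andbT -HPP; apply: lbr_sub => a b aP bP.
  have : b \in K by apply: (subvP HPK).
  rewrite -EW => /memv_addP [w wW [v /vlineP [c ->] ->]].
  have aK : a \in K by apply: (subvP HPK).
  rewrite brDr brZr; apply: memvD; [exact: HWs | apply: memvZ; exact: Hu].
have noAIC : ~ (exists C, abelian_ideal_completion br M C).
  move=> [C [[[HCs HCM HCcomp] HC] [Kc [[_ HKc] HCK]]]].
  have KM : (Kc <= M)%VS.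
    by apply: HKc => I0 HI1 HI2 HI3 HI4; apply: HCcomp.
  have HCJ : ~~ (C <= J)%VS.
    by apply/negP => CJ; apply: HCM; exact: subv_trans CJ HJM.
  have PCJ : (P <= C + J)%VS.
    apply: Jbig; [exact: ideal_add | exact: addvSr | ].
    by move=> E; move: HCJ; rewrite -E addvSl.
  move/negP: HPM; apply.
  rewrite -HPP; apply: subv_trans (lbrS PCJ PCJ) _.
  rewrite addvC; apply: subv_trans (lbr_addI _ HJ) _.
  by rewrite subv_add HJM (subv_trans HCK KM).
move/negP: HPM; apply; apply: subv_trans HPI _.
by apply/subvP => x xI; apply: (HF x xI M HM noAIC).
Qed.

End LieFacts.

Theorem theorem2p11 (F : fieldType) (L : vectType F) (br : L -> L -> L) :
  is_lie br ->
  exists P : {vspace L}, is_phistar br P /\ is_radical br P.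
Proof.
move=> Hl; have [R HR] := ex_radical Hl; exists R; split => //.
case: (HR) => HRi HRs HRmax; split => //.
- exact: easy.
- by move=> I HI HIF; apply: HRmax => //; apply: (hard Hl).
Qed.
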